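(* Let $a\in\mathbb{R}$, $b\in(a,\infty)$, $h\in\mathbb{N}$, $v_1,\dots,v_h,w_1,\dots,w_h\in(0,\infty)$, let $f,p\in C(\mathbb{R},\mathbb{R})$ satisfy for all $x\in\mathbb{R}$ that $p(x)\ge0$ and $p^{-1}((0,\infty))=(a,b)$, with $\mathcal{L}$, $I_i^\theta$, $\operatorname{Lip}$ as in the context. Assume $\operatorname{Lip}(f)<\min_{i\in\{1,\dots,h\}}v_iw_i$, let $\theta\in\mathbb{R}^{h+1}$ satisfy $(\nabla\mathcal{L})(\theta)=0$, let $\varepsilon,\delta\in(0,\infty)$ satisfy $\varepsilon-\delta>2[\min_{j\in\{1,\dots,h\}}w_j]^{-1}$ and $\inf_{x\in[a+\delta,b-\delta]}p(x)\ge[\min_{j\in\{1,\dots,h\}}w_j]^{-1}\operatorname{Lip}(p)$, assume that $p|_{[a,a+\varepsilon]}$ is strictly increasing and $p|_{[b-\varepsilon,b]}$ is strictly decreasing, and assume that $\theta$ is not a descending critical point of $\mathcal{L}$. Then for all $x\in(a,b)$ it holds that $$\sum_{j\in\{1,\dots,h\},\,x\in I_j^\theta}v_jw_j\le4\max_{j\in\{1,\dots,h\},\,x\in I_j^\theta}v_jw_j.$$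
   Context: Let $\mathfrak{c}(x)=\min\{\max\{x,0\},1\}$. For $F\in C(\mathbb{R},\mathbb{R})$ let $\operatorname{Lip}(F)=\sup_{x,y\in[a,b],x\ne y}\frac{|F(x)-F(y)|}{|x-y|}$. For $\theta=(\theta_1,\dots,\theta_{h+1})\in\mathbb{R}^{h+1}$ and $i\in\{1,\dots,h\}$ let $\psi_i(\theta)=-[w_i]^{-1}\theta_i$, $I_i^\theta=(\psi_i(\theta),\psi_i(\theta)+[w_i]^{-1})\cap(a,b)$, $\mathcal{N}^\theta(x)=\theta_{h+1}+\sum_{i=1}^hv_i\mathfrak{c}(w_ix+\theta_i)$, and $\mathcal{L}(\theta)=\int_a^b(\mathcal{N}^\theta(x)-f(x))^2p(x)\,\mathrm{d}x$; in this setting $\mathcal{L}\in C^2(\mathbb{R}^{h+1},\mathbb{R})$. For $n\in\mathbb{N}$ and $F\in C^2(\mathbb{R}^n,\mathbb{R})$, a point $x\in\mathbb{R}^n$ is a descending critical point of $F$ if $(\nabla F)(x)=0$ and there exists $u\in\mathbb{R}^n$ with $\langle u,((\operatorname{Hess}F)(x))u\rangle<0$. *)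

(* Defs.v *)
From Stdlib Require Import Reals ClassicalEpsilon.
From Coquelicot Require Import Coquelicot.
Open Scope R_scope.

(* Vectors in R^n are represented as functions nat -> R, coordinates 1..n. *)

Definition clip (x : R) : R := Rmin (Rmax x 0) 1.

Fixpoint sumR (n : nat) (F : nat -> R) : R :=
  match n with O => 0 | S k => sumR k F + F (S k) end.

(* minimum over indices 1..n (meaningful for n >= 1) *)
Fixpoint minR (n : nat) (F : nat -> R) : R :=
  match n with O => F 1%nat | S k => Rmin (minR k F) (F (S k)) end.

(* maximum over those indices j in 1..n with P j; 0 if there is none
   (only used for positive values F j) *)
Fixpoint maxR_sel (n : nat) (P : nat -> Prop) (F : nat -> R) : R :=
  match n with
  | O => 0
  | S k => if excluded_middle_informative (P (S k))
           then Rmax (maxR_sel k P F) (F (S k)) else maxR_sel k P F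
  end.

Definition sumR_sel (n : nat) (P : nat -> Prop) (F : nat -> R) : R :=
  sumR n (fun j => if excluded_middle_informative (P j) then F j else 0).

Definition Lip (a b : R) (F : R -> R) : Rbar :=
  Lub_Rbar (fun r => exists x y, a <= x <= b /\ a <= y <= b /\ x <> y /\
                         r = Rabs (F x - F y) / Rabs (x - y)).

(* inf_{x in [c,d]} F x  (in Rbar; +oo if the interval is empty) *)
Definition inf_on (c d : R) (F : R -> R) : Rbar :=
  Glb_Rbar (fun r => exists x, c <= x <= d /\ r = F x).

Definition Nnet (h : nat) (v w : nat -> R) (theta : nat -> R) (x : R) : R :=
  theta (S h) + sumR h (fun i => v i * clip (w i * x + theta i)).

Definition Risk (a b : R) (h : nat) (v w : nat -> R) (f p : R -> R)
  (theta : nat -> R) : R :=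
  RInt (fun x => (Nnet h v w theta x - f x) ^ 2 * p x) a b.

Definition psi (w theta : nat -> R) (i : nat) : R := - (/ w i) * theta i.

Definition inI (a b : R) (w theta : nat -> R) (i : nat) (x : R) : Prop :=
  (psi w theta i < x < psi w theta i + / w i) /\ (a < x < b).

Definition upd (theta : nat -> R) (k : nat) (t : R) : nat -> R :=
  fun i => if Nat.eqb i k then t else theta i.

Definition partial (F : (nat -> R) -> R) (theta : nat -> R) (k : nat) : R :=
  Derive (fun t => F (upd theta k t)) (theta k).

Definition hess (F : (nat -> R) -> R) (theta : nat -> R) (i j : nat) : R :=
  Derive (fun t => partial F (upd theta i t) j) (theta i).

Definition grad_zero (n : nat) (F : (nat -> R) -> R) (theta : nat -> R) : Prop :=
  forall k, (1 <= k <= n)%nat -> partial F theta k = 0.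

Definition hess_quad (n : nat) (F : (nat -> R) -> R) (theta u : nat -> R) : R :=
  sumR n (fun i => sumR n (fun j => u i * hess F theta i j * u j)).

Definition descending_critical_point (n : nat) (F : (nat -> R) -> R)
  (theta : nat -> R) : Prop :=
  grad_zero n F theta /\ exists u : nat -> R, hess_quad n F theta u < 0.

(* Main.v *)
Require Import Defs.
From Stdlib Require Import Reals Lra Psatz FunctionalExtensionality Lia Arith ClassicalEpsilon Classical.
From Coquelicot Require Import Coquelicot.
Open Scope R_scope.

Lemma c2c (f : R -> R) : continuity f -> forall x, continuous f x.
Proof. intros H x. apply continuity_pt_filterlim. apply H. Qed.

Lemma clip_eq x : clip x = (Rabs x - Rabs (x - 1) + 1) / 2.
Proof.
  unfold clip, Rmin, Rmax.
  destruct (Rle_dec x 0); destruct (Rle_dec _ 1);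
  unfold Rabs; repeat destruct Rcase_abs; lra.
Qed.

Lemma clip_cont : continuity clip.
Proof.
  assert (E : clip = fun x => (Rabs x - Rabs (x - 1) + 1) / 2).
  { apply functional_extensionality. apply clip_eq. }
  rewrite E. reg.
Qed.

Lemma RInt_scalR f u v c : ex_RInt f u v -> RInt (fun x => c * f x) u v = c * RInt f u v.
Proof. intro H. exact (RInt_scal f u v c H). Qed.
Lemma RInt_plusR f g u v : ex_RInt f u v -> ex_RInt g u v -> RInt (fun x => f x + g x) u v = RInt f u v + RInt g u v.
Proof. intros H1 H2. exact (RInt_plus f g u v H1 H2). Qed.
Lemma RInt_minusR f g u v : ex_RInt f u v -> ex_RInt g u v -> RInt (fun x => f x - g x) u v = RInt f u v - RInt g u v.
Proof. intros H1 H2. exact (RInt_minus f g u v H1 H2). Qed.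
Lemma RInt_ChaslesR f u v z : ex_RInt f u v -> ex_RInt f v z -> RInt f u v + RInt f v z = RInt f u z.
Proof. intros H1 H2. exact (RInt_Chasles f u v z H1 H2). Qed.
Lemma RInt_constR u v c : RInt (fun _ => c) u v = (v - u) * c.
Proof. exact (RInt_const u v c). Qed.
Lemma exRc f u v : continuity f -> ex_RInt f u v.
Proof. intro H. apply (@ex_RInt_continuous R_CompleteNormedModule). intros; apply c2c; auto. Qed.

Ltac rring := lazymatch goal with |- ?x = ?y => change (@eq R x y); ring end.

Definition Prim (g : R -> R) (z : R) : R := RInt g 0 z.

Lemma prim_is_derive g : continuity g -> forall z, is_derive (Prim g) z (g z).
Proof.
  intros Hg z. apply (is_derive_RInt g (Prim g) 0 z).
  - apply filter_forall. intro y. unfold Prim. apply (@RInt_correct R_CompleteNormedModule). apply exRc; auto.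
  - apply c2c; auto.
Qed.

Lemma prim_Derive g : continuity g -> forall z, Derive (fun x => Prim g x) z = g z.
Proof. intros Hg z. apply is_derive_unique. apply prim_is_derive; auto. Qed.

Lemma prim_ex_derive g : continuity g -> forall z, ex_derive (fun x => Prim g x) z.
Proof. intros Hg z. eexists. apply prim_is_derive; auto. Qed.

Lemma RInt_prim g u v : continuity g -> RInt g u v = Prim g v - Prim g u.
Proof.
  intro Hg. unfold Prim. pose proof (RInt_ChaslesR g 0 u v (exRc _ _ _ Hg) (exRc _ _ _ Hg)) as E.
  simpl in *. lra.
Qed.

Lemma clip_0 x : x <= 0 -> clip x = 0.
Proof. intro. rewrite clip_eq. unfold Rabs; repeat destruct Rcase_abs; lra. Qed.
Lemma clip_lin x : 0 <= x <= 1 -> clip x = x.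
Proof. intro. rewrite clip_eq. unfold Rabs; repeat destruct Rcase_abs; lra. Qed.
Lemma clip_1 x : 1 <= x -> clip x = 1.
Proof. intro. rewrite clip_eq. unfold Rabs; repeat destruct Rcase_abs; lra. Qed.
Lemma clip_mono x y : x <= y -> clip x <= clip y.
Proof. intro. rewrite !clip_eq. unfold Rabs; repeat destruct Rcase_abs; lra. Qed.
Lemma clip_range x : 0 <= clip x <= 1.
Proof. rewrite clip_eq. unfold Rabs; repeat destruct Rcase_abs; lra. Qed.

(* the one-dimensional risk along coordinate i *)
Definition phi (a b v w : R) (C p : R -> R) (s : R) :=
  RInt (fun y => (C y + v * clip (w * y + s)) ^ 2 * p y) a b.
Definition lo (w s : R) := - (/ w) * s.
Definition hi (w s : R) := - (/ w) * s + / w.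

Definition Phi (v w : R) (C p : R -> R) (A0 B0 s : R) :=
  Prim (fun y => C y ^ 2 * p y) (lo w s) - Prim (fun y => C y ^ 2 * p y) A0
  + (Prim (fun y => (C y + v * w * y) ^ 2 * p y) (hi w s)
     - Prim (fun y => (C y + v * w * y) ^ 2 * p y) (lo w s))
  + 2 * v * s * (Prim (fun y => (C y + v * w * y) * p y) (hi w s)
                 - Prim (fun y => (C y + v * w * y) * p y) (lo w s))
  + v * v * s * s * (Prim p (hi w s) - Prim p (lo w s))
  + (Prim (fun y => (C y + v) ^ 2 * p y) B0 - Prim (fun y => (C y + v) ^ 2 * p y) (hi w s)).

Lemma RInt_zero_out f u z : (forall y, Rmin u z < y < Rmax u z -> f y = 0) -> RInt f u z = 0.
Proof.
  intro H. rewrite (RInt_ext f (fun _ => 0)) by auto. rewrite RInt_constR. simpl. ring.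
Qed.

Lemma phi_eq a b v w C p A0 B0 s :
  continuity C -> continuity p -> 0 < w ->
  (forall y, y <= a -> p y = 0) -> (forall y, b <= y -> p y = 0) ->
  A0 <= a -> b <= B0 -> A0 <= lo w s -> hi w s <= B0 ->
  phi a b v w C p s = Phi v w C p A0 B0 s.
Proof.
  intros HC Hp Hw Hpa Hpb HA HB Hl Hh.
  set (F := fun y => (C y + v * clip (w * y + s)) ^ 2 * p y).
  assert (HF : continuity F).
  { unfold F. assert (Hc : continuity (fun y => clip (w * y + s))).
    { intro y. apply (continuity_pt_comp (fun y => w * y + s) clip); [reg|apply clip_cont]. }
    reg; apply clip_cont. }
  assert (E1 : phi a b v w C p s = RInt F A0 B0).
  { unfold phi. fold F.
    rewrite <- (RInt_ChaslesR F A0 b B0) by (apply exRc; auto).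
    rewrite <- (RInt_ChaslesR F A0 a b) by (apply exRc; auto).
    rewrite (RInt_zero_out F A0 a), (RInt_zero_out F b B0). simpl; lra.
    - intros y Hy. unfold F. rewrite Hpb. rring.
      unfold Rmin, Rmax in Hy; destruct Rle_dec; lra.
    - intros y Hy. unfold F. rewrite Hpa. rring.
      unfold Rmin, Rmax in Hy; destruct Rle_dec; lra. }
  rewrite E1.
  assert (Hlh : lo w s < hi w s).
  { unfold lo, hi. assert (0 < / w) by (apply Rinv_0_lt_compat; auto). lra. }
  rewrite <- (RInt_ChaslesR F A0 (hi w s) B0) by (apply exRc; auto).
  rewrite <- (RInt_ChaslesR F A0 (lo w s) (hi w s)) by (apply exRc; auto).
  assert (Hwl : forall y, y <= lo w s -> w * y + s <= 0).
  { intros y Hy. unfold lo in Hy. apply Rmult_le_compat_l with (r := w) in Hy; [|lra].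
    replace (w * (- / w * s)) with (- s) in Hy by (field; lra). lra. }
  assert (Hwh : forall y, hi w s <= y -> 1 <= w * y + s).
  { intros y Hy. unfold hi in Hy. apply Rmult_le_compat_l with (r := w) in Hy; [|lra].
    replace (w * (- / w * s + / w)) with (1 - s) in Hy by (field; lra). lra. }
  assert (Hwm : forall y, lo w s <= y <= hi w s -> 0 <= w * y + s <= 1).
  { intros y Hy. split.
    - destruct Hy as [Hy _]. apply Rmult_le_compat_l with (r := w) in Hy; [|lra]. unfold lo in Hy.
      replace (w * (- / w * s)) with (- s) in Hy by (field; lra). lra.
    - destruct Hy as [_ Hy]. apply Rmult_le_compat_l with (r := w) in Hy; [|lra]. unfold hi in Hy.
      replace (w * (- / w * s + / w)) with (1 - s) in Hy by (field; lra). lra. }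
  rewrite (RInt_ext F (fun y => C y ^ 2 * p y) A0 (lo w s)).
  2:{ intros y Hy. unfold F. rewrite clip_0. rring. apply Hwl.
      unfold Rmin, Rmax in Hy; destruct Rle_dec; lra. }
  rewrite (RInt_ext F (fun y => (C y + v) ^ 2 * p y) (hi w s) B0).
  2:{ intros y Hy. unfold F. rewrite clip_1. rring. apply Hwh.
      unfold Rmin, Rmax in Hy; destruct Rle_dec; lra. }
  rewrite (RInt_ext F (fun y => ((C y + v * w * y) ^ 2 * p y + (2 * v * s) * ((C y + v * w * y) * p y))
                                + (v * v * s * s) * p y) (lo w s) (hi w s)).
  2:{ intros y Hy. unfold F. rewrite clip_lin. rring. apply Hwm.
      unfold Rmin, Rmax in Hy; destruct Rle_dec; lra. }
  assert (c1 : continuity (fun y => C y ^ 2 * p y)) by reg.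
  assert (c2 : continuity (fun y => (C y + v) ^ 2 * p y)) by reg.
  assert (c3 : continuity (fun y => (C y + v * w * y) ^ 2 * p y)) by reg.
  assert (c4 : continuity (fun y => (C y + v * w * y) * p y)) by reg.
  rewrite RInt_plusR, RInt_plusR, RInt_scalR, RInt_scalR.
  all: try (apply exRc; reg).
  rewrite !RInt_prim by auto.
  unfold Phi. rring.
Qed.

Definition D1 (v w : R) (C p : R -> R) (s : R) :=
  2 * v * (Prim (fun y => (C y + v * w * y) * p y) (hi w s) - Prim (fun y => (C y + v * w * y) * p y) (lo w s))
  + 2 * v * v * s * (Prim p (hi w s) - Prim p (lo w s)).
Definition D2 (v w : R) (C p : R -> R) (s : R) :=
  2 * v * (v * (Prim p (hi w s) - Prim p (lo w s))
           - / w * ((C (hi w s) + v) * p (hi w s) - C (lo w s) * p (lo w s))).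

Lemma Phi_deriv v w C p A0 B0 s : continuity C -> continuity p -> 0 < w ->
  is_derive (Phi v w C p A0 B0) s (D1 v w C p s).
Proof.
  intros HC Hp Hw.
  assert (c1 : continuity (fun y => C y ^ 2 * p y)) by reg.
  assert (c2 : continuity (fun y => (C y + v) ^ 2 * p y)) by reg.
  assert (c3 : continuity (fun y => (C y + v * w * y) ^ 2 * p y)) by reg.
  assert (c4 : continuity (fun y => (C y + v * w * y) * p y)) by reg.
  unfold Phi, lo, hi. auto_derive.
  - repeat split; apply prim_ex_derive; auto.
  - rewrite !prim_Derive by auto. unfold D1, lo, hi. field. lra.
Qed.

Lemma ball_R (s t e : R) : ball s e t <-> Rabs (t - s) < e.
Proof. reflexivity. Qed.

Lemma phi_deriv a b v w C p s :
  continuity C -> continuity p -> 0 < w ->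
  (forall y, y <= a -> p y = 0) -> (forall y, b <= y -> p y = 0) ->
  is_derive (phi a b v w C p) s (D1 v w C p s).
Proof.
  intros HC Hp Hw Hpa Hpb.
  set (A0 := Rmin a (lo w s - / w)). set (B0 := Rmax b (hi w s + / w)).
  apply (is_derive_ext_loc (Phi v w C p A0 B0)).
  - exists (mkposreal 1 Rlt_0_1). intros t Ht. simpl in Ht. rewrite ball_R in Ht.
    symmetry. apply phi_eq; auto.
    + unfold A0. apply Rmin_l.
    + unfold B0. apply Rmax_l.
    + unfold A0. eapply Rle_trans; [apply Rmin_r|]. unfold lo.
      assert (0 < / w) by (apply Rinv_0_lt_compat; auto).
      apply Rabs_def2 in Ht. nra.
    + unfold B0. eapply Rle_trans; [|apply Rmax_r]. unfold hi.
      assert (0 < / w) by (apply Rinv_0_lt_compat; auto).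
      apply Rabs_def2 in Ht. nra.
  - apply Phi_deriv; auto.
Qed.

Lemma D1_deriv v w C p s : continuity C -> continuity p -> 0 < w ->
  is_derive (D1 v w C p) s (D2 v w C p s).
Proof.
  intros HC Hp Hw.
  assert (c4 : continuity (fun y => (C y + v * w * y) * p y)) by reg.
  unfold D1, lo, hi. auto_derive.
  - repeat split; apply prim_ex_derive; auto.
  - rewrite !prim_Derive by auto. unfold D2, lo, hi. field. lra.
Qed.

Lemma D1_RInt v w C p s : continuity C -> continuity p -> 0 < w ->
  D1 v w C p s = 2 * v * RInt (fun y => (C y + v * (w * y + s)) * p y) (lo w s) (hi w s).
Proof.
  intros HC Hp Hw.
  assert (c4 : continuity (fun y => (C y + v * w * y) * p y)) by reg.
  rewrite (RInt_ext _ (fun y => (C y + v * w * y) * p y + (v * s) * p y)).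
  2:{ intros; rring. }
  rewrite RInt_plusR, RInt_scalR; try (apply exRc; reg).
  rewrite !RInt_prim by auto. unfold D1. rring.
Qed.

Lemma sumR_ext n F G : (forall k, (1 <= k <= n)%nat -> F k = G k) -> sumR n F = sumR n G.
Proof.
  induction n; intros H; simpl; auto.
  rewrite IHn by (intros; apply H; lia). rewrite H by lia. auto.
Qed.
Lemma sumR_le n F G : (forall k, (1 <= k <= n)%nat -> F k <= G k) -> sumR n F <= sumR n G.
Proof.
  induction n; intros H; simpl; [lra|].
  assert (sumR n F <= sumR n G) by (apply IHn; intros; apply H; lia).
  assert (F (S n) <= G (S n)) by (apply H; lia). lra.
Qed.
Lemma sumR_minus n F G : sumR n F - sumR n G = sumR n (fun k => F k - G k).
Proof. induction n; simpl; [ring|]. rewrite <- IHn. ring. Qed.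
Lemma sumR_scal n F c : sumR n (fun k => F k * c) = sumR n F * c.
Proof. induction n; simpl; [ring|]. rewrite IHn. ring. Qed.
Lemma sumR_zero n : sumR n (fun _ => 0) = 0.
Proof. induction n; simpl; [ring|]. rewrite IHn. ring. Qed.

Lemma sumR_delta n i F : (1 <= i <= n)%nat ->
  sumR n (fun k => if Nat.eqb k i then F k else 0) = F i.
Proof.
  induction n; intros Hi; [lia|]. cbn [sumR].
  destruct (Nat.eqb_spec (S n) i).
  - subst. rewrite (sumR_ext n _ (fun _ => 0)).
    + rewrite sumR_zero. ring.
    + intros k Hk. destruct (Nat.eqb_spec k (S n)); [lia|auto].
  - rewrite IHn by lia. ring.
Qed.
Lemma sumR_upd n i s (theta : nat -> R) (G : nat -> R -> R) : (1 <= i <= n)%nat ->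
  sumR n (fun k => G k (upd theta i s k)) = sumR n (fun k => G k (theta k)) - G i (theta i) + G i s.
Proof.
  intros Hi.
  assert (E : sumR n (fun k => G k (upd theta i s k)) - sumR n (fun k => G k (theta k))
              = sumR n (fun k => if Nat.eqb k i then G k s - G k (theta k) else 0)).
  { rewrite sumR_minus. apply sumR_ext. intros k Hk. unfold upd.
    destruct (Nat.eqb_spec k i); [auto|ring]. }
  rewrite sumR_delta in E by auto. lra.
Qed.
Lemma sumR_cont n (F : nat -> R -> R) : (forall k, continuity (F k)) ->
  continuity (fun y => sumR n (fun k => F k y)).
Proof.
  intros H. induction n; simpl.
  - apply continuity_const. intros ? ?; auto.
  - apply continuity_plus; auto.
Qed.

Lemma Nnet_cont h v w theta : continuity (Nnet h v w theta).
Proof.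
  unfold Nnet. apply continuity_plus.
  - apply continuity_const. intros ? ?; auto.
  - apply (sumR_cont h (fun k y => v k * clip (w k * y + theta k))).
    intro k. intro y. apply continuity_pt_mult. apply continuity_pt_const; intros ? ?; auto.
    apply (continuity_pt_comp (fun y => w k * y + theta k) clip); [reg|apply clip_cont].
Qed.

Lemma Nnet_upd h v w theta i s y : (1 <= i <= h)%nat ->
  Nnet h v w (upd theta i s) y = Nnet h v w theta y - v i * clip (w i * y + theta i) + v i * clip (w i * y + s).
Proof.
  intros Hi. unfold Nnet.
  rewrite (sumR_upd h i s theta (fun k t => v k * clip (w k * y + t))) by auto.
  unfold upd at 1. destruct (Nat.eqb_spec (S h) i); [lia|]. ring.
Qed.

Definition Cn (h : nat) (v w : nat -> R) (f : R -> R) theta i y :=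
  Nnet h v w theta y - v i * clip (w i * y + theta i) - f y.

Lemma Cn_cont h v w f theta i : continuity f -> continuity (Cn h v w f theta i).
Proof.
  intro Hf. unfold Cn. apply continuity_minus; [apply continuity_minus|auto].
  apply Nnet_cont. intro y. apply continuity_pt_mult. apply continuity_pt_const; intros ? ?; auto.
  apply (continuity_pt_comp (fun y => w i * y + theta i) clip); [reg|apply clip_cont].
Qed.

Lemma Risk_phi a b h v w f p theta i s : (1 <= i <= h)%nat ->
  Risk a b h v w f p (upd theta i s) = phi a b (v i) (w i) (Cn h v w f theta i) p s.
Proof.
  intros Hi. unfold Risk, phi. f_equal. apply functional_extensionality. intro y.
  rewrite Nnet_upd by auto. unfold Cn. ring.
Qed.

Lemma upd_upd (theta : nat -> R) i s t : upd (upd theta i s) i t = upd theta i t.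
Proof. apply functional_extensionality. intro k. unfold upd. destruct (Nat.eqb k i); auto. Qed.
Lemma upd_same (theta : nat -> R) i s : upd theta i s i = s.
Proof. unfold upd. rewrite Nat.eqb_refl. auto. Qed.

Lemma partial_eq a b h v w f p theta i s :
  (1 <= i <= h)%nat -> continuity f -> continuity p -> 0 < w i ->
  (forall y, y <= a -> p y = 0) -> (forall y, b <= y -> p y = 0) ->
  partial (Risk a b h v w f p) (upd theta i s) i = D1 (v i) (w i) (Cn h v w f theta i) p s.
Proof.
  intros Hi Hf Hp Hw Hpa Hpb. unfold partial. rewrite upd_same.
  rewrite (Derive_ext _ (phi a b (v i) (w i) (Cn h v w f theta i) p)).
  - apply is_derive_unique. apply phi_deriv; auto. apply Cn_cont; auto.
  - intro t. rewrite upd_upd. apply Risk_phi; auto.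
Qed.

Lemma hess_eq a b h v w f p theta i :
  (1 <= i <= h)%nat -> continuity f -> continuity p -> 0 < w i ->
  (forall y, y <= a -> p y = 0) -> (forall y, b <= y -> p y = 0) ->
  hess (Risk a b h v w f p) theta i i = D2 (v i) (w i) (Cn h v w f theta i) p (theta i).
Proof.
  intros Hi Hf Hp Hw Hpa Hpb. unfold hess.
  rewrite (Derive_ext _ (D1 (v i) (w i) (Cn h v w f theta i) p)).
  - apply is_derive_unique. apply D1_deriv; auto. apply Cn_cont; auto.
  - intro t. apply partial_eq; auto.
Qed.

Lemma partial_eq0 a b h v w f p theta i :
  (1 <= i <= h)%nat -> continuity f -> continuity p -> 0 < w i ->
  (forall y, y <= a -> p y = 0) -> (forall y, b <= y -> p y = 0) ->
  partial (Risk a b h v w f p) theta i = D1 (v i) (w i) (Cn h v w f theta i) p (theta i).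
Proof.
  intros. rewrite <- (partial_eq a b h v w f p theta i (theta i)) by auto.
  f_equal. apply functional_extensionality. intro k. unfold upd.
  destruct (Nat.eqb_spec k i); subst; auto.
Qed.

Lemma hess_quad_unit n F theta i : (1 <= i <= n)%nat ->
  hess_quad n F theta (fun k => if Nat.eqb k i then 1 else 0) = hess F theta i i.
Proof.
  intros Hi. unfold hess_quad.
  rewrite (sumR_ext n _ (fun k => if Nat.eqb k i then hess F theta k i else 0)).
  - apply (sumR_delta n i (fun k => hess F theta k i)); auto.
  - intros k Hk. rewrite (sumR_ext n _ (fun j => if Nat.eqb j i then
        (if Nat.eqb k i then 1 else 0) * hess F theta k j else 0)).
    + rewrite sumR_delta by auto. destruct (Nat.eqb k i); ring.
    + intros j Hj. destruct (Nat.eqb j i); ring.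
Qed.

Ltac creg := repeat (first [ assumption | apply continuity_mult | apply continuity_minus
  | apply continuity_plus | apply derivable_continuous, derivable_id | (apply continuity_const; intros ? ?; reflexivity) ]).


Lemma RInt_lin c z u : RInt (fun y => c + y) z u = ((c + u) ^ 2 - (c + z) ^ 2) / 2.
Proof.
  assert (H : is_RInt (fun y => c + y) z u (minus ((fun y => (c + y) ^ 2 / 2) u) ((fun y => (c + y) ^ 2 / 2) z))).
  { apply (is_RInt_derive (fun y => (c + y) ^ 2 / 2) (fun y => c + y)).
    - intros y _. auto_derive; auto. field.
    - intros y _. apply c2c. reg. }
  apply (@is_RInt_unique R_CompleteNormedModule) in H. rewrite H. unfold minus, plus, opp. simpl. field.
Qed.

Lemma RInt_le' f g u v : u <= v -> continuity f -> continuity g ->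
  (forall y, u <= y <= v -> f y <= g y) -> RInt f u v <= RInt g u v.
Proof.
  intros Huv Hf Hg H. apply RInt_le; auto; try (apply exRc; auto).
  intros; apply H; lra.
Qed.

Lemma ramp_right (p : R -> R) u v M : u < v -> continuity p ->
  (forall y, u <= y <= v -> 0 <= p y <= M) -> 0 < M ->
  RInt p u v ^ 2 <= 2 * M * RInt (fun y => (v - y) * p y) u v.
Proof.
  intros Huv Hp Hb HM.
  set (Pi := RInt p u v).
  assert (HPi0 : 0 <= Pi).
  { unfold Pi. replace 0 with ((v - u) * 0) by ring. rewrite <- RInt_constR.
    apply RInt_le'; [lra| |auto|]. apply continuity_const; intros ? ?; auto.
    intros; apply Hb; auto. }
  assert (HPi1 : Pi <= M * (v - u)).
  { unfold Pi. replace (M * (v - u)) with ((v - u) * M) by ring. rewrite <- RInt_constR.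
    apply RInt_le'; [lra|auto| |]. apply continuity_const; intros ? ?; auto.
    intros; apply Hb; auto. }
  set (lam := Pi / M).
  assert (Hl0 : 0 <= lam) by (unfold lam; apply Rmult_le_pos; [auto|left; apply Rinv_0_lt_compat; auto]).
  assert (Hl1 : lam <= v - u).
  { unfold lam. apply Rmult_le_reg_l with M; auto. unfold Rdiv. field_simplify; lra. }
  set (z := v - lam).
  assert (cq : continuity (fun y => (v - y) * p y)) by reg.
  rewrite <- (RInt_ChaslesR _ u z v) by (apply exRc; auto).
  assert (R1 : lam * RInt p u z <= RInt (fun y => (v - y) * p y) u z).
  { rewrite <- RInt_scalR by (apply exRc; auto).
    apply RInt_le'; [unfold z; lra|reg|auto|].
    intros y Hy. assert (0 <= p y) by (apply Hb; unfold z in Hy; lra).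
    apply Rmult_le_compat_r; unfold z in Hy; lra. }
  assert (R2 : lam * RInt p z v - M * (lam ^ 2 / 2) <= RInt (fun y => (v - y) * p y) z v).
  { assert (E : M * (lam ^ 2 / 2) = M * RInt (fun y => (lam - v) + y) z v).
    { rewrite RInt_lin. unfold z. field. }
    rewrite E. rewrite <- !RInt_scalR by (apply exRc; creg).
    rewrite <- RInt_minusR by (apply exRc; creg).
    apply RInt_le'; [unfold z; lra|reg|auto|].
    intros y Hy. assert (0 <= p y <= M) by (apply Hb; unfold z in Hy; lra).
    unfold z in Hy. nra. }
  assert (Hsplit : RInt p u z + RInt p z v = Pi) by (unfold Pi; apply RInt_ChaslesR; apply exRc; auto).
  assert (Hk : lam * Pi - M * (lam ^ 2 / 2) <= RInt (fun y => (v - y) * p y) u z + RInt (fun y => (v - y) * p y) z v).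
  { rewrite <- Hsplit. lra. }
  assert (Hlam : lam * M = Pi) by (unfold lam; field; lra).
  fold Pi.
  assert (Pi ^ 2 = 2 * M * (lam * Pi - M * (lam ^ 2 / 2))).
  { rewrite <- Hlam. field. }
  nra.
Qed.

Lemma ramp_left (p : R -> R) u v M : u < v -> continuity p ->
  (forall y, u <= y <= v -> 0 <= p y <= M) -> 0 < M ->
  RInt p u v ^ 2 <= 2 * M * RInt (fun y => (y - u) * p y) u v.
Proof.
  intros Huv Hp Hb HM.
  set (Pi := RInt p u v).
  assert (HPi0 : 0 <= Pi).
  { unfold Pi. replace 0 with ((v - u) * 0) by ring. rewrite <- RInt_constR.
    apply RInt_le'; [lra| |auto|]. apply continuity_const; intros ? ?; auto.
    intros; apply Hb; auto. }
  assert (HPi1 : Pi <= M * (v - u)).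
  { unfold Pi. replace (M * (v - u)) with ((v - u) * M) by ring. rewrite <- RInt_constR.
    apply RInt_le'; [lra|auto| |]. apply continuity_const; intros ? ?; auto.
    intros; apply Hb; auto. }
  set (lam := Pi / M).
  assert (Hl0 : 0 <= lam) by (unfold lam; apply Rmult_le_pos; [auto|left; apply Rinv_0_lt_compat; auto]).
  assert (Hl1 : lam <= v - u).
  { unfold lam. apply Rmult_le_reg_l with M; auto. unfold Rdiv. field_simplify; lra. }
  set (z := u + lam).
  assert (cq : continuity (fun y => (y - u) * p y)) by reg.
  rewrite <- (RInt_ChaslesR _ u z v) by (apply exRc; auto).
  assert (R1 : lam * RInt p z v <= RInt (fun y => (y - u) * p y) z v).
  { rewrite <- RInt_scalR by (apply exRc; auto).
    apply RInt_le'; [unfold z; lra|reg|auto|].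
    intros y Hy. assert (0 <= p y) by (apply Hb; unfold z in Hy; lra).
    apply Rmult_le_compat_r; unfold z in Hy; lra. }
  assert (R2 : lam * RInt p u z - M * (lam ^ 2 / 2) <= RInt (fun y => (y - u) * p y) u z).
  { assert (E : M * (lam ^ 2 / 2) = M * RInt (fun y => (lam + u) + - y) u z).
    { rewrite (RInt_ext _ (fun y => (-1) * ((- lam - u) + y))) by (intros; rring).
      rewrite RInt_scalR by (apply exRc; creg).
      rewrite RInt_lin. unfold z. field. }
    rewrite E. rewrite <- !RInt_scalR by (apply exRc; creg).
    rewrite <- RInt_minusR by (apply exRc; creg).
    apply RInt_le'; [unfold z; lra|reg|auto|].
    intros y Hy. assert (0 <= p y <= M) by (apply Hb; unfold z in Hy; lra).
    unfold z in Hy. nra. }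
  assert (Hsplit : RInt p u z + RInt p z v = Pi) by (unfold Pi; apply RInt_ChaslesR; apply exRc; auto).
  assert (Hlam : lam * M = Pi) by (unfold lam; field; lra).
  fold Pi.
  assert (Pi ^ 2 = 2 * M * (lam * Pi - M * (lam ^ 2 / 2))).
  { rewrite <- Hlam. field. }
  nra.
Qed.

Lemma sign_lemma (g p : R -> R) al be sg :
  al < be -> continuity g -> continuity p -> (forall y, 0 <= p y) ->
  0 < RInt p al be -> RInt (fun y => g y * p y) al be = 0 -> 0 < sg ->
  (forall y y', al <= y <= y' -> y' <= be -> sg * (y' - y) <= g y' - g y) ->
  g al <= 0 /\ 0 <= g be.
Proof.
  intros Hab Hg Hp Hp0 HPi HG Hsg Hsl.
  assert (A1 : g al * RInt p al be <= 0).
  { rewrite <- HG, <- RInt_scalR by (apply exRc; auto).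
    apply RInt_le'; [lra|creg|creg|]. intros y Hy.
    assert (sg * (y - al) <= g y - g al) by (apply Hsl; lra).
    assert (0 <= p y) by auto. assert (0 <= g y - g al) by nra. nra. }
  assert (A2 : 0 <= g be * RInt p al be).
  { rewrite <- HG, <- RInt_scalR by (apply exRc; auto).
    apply RInt_le'; [lra|creg|creg|]. intros y Hy.
    assert (sg * (be - y) <= g be - g y) by (apply Hsl; lra).
    assert (0 <= p y) by auto. assert (0 <= g be - g y) by nra. nra. }
  split; nra.
Qed.

Lemma case_inc (g p : R -> R) al be sg ct :
  al < be -> continuity g -> continuity p -> (forall y, 0 <= p y) ->
  0 < RInt p al be -> RInt (fun y => g y * p y) al be = 0 -> 0 < sg ->
  (forall y y', al <= y <= y' -> y' <= be -> sg * (y' - y) <= g y' - g y) ->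
  g be * p be - g al * p al <= ct * RInt p al be ->
  0 < p be -> (forall y, al <= y <= be -> p y <= p be) -> sg <= 2 * ct.
Proof.
  intros Hab Hg Hp Hp0 HPi HG Hsg Hsl HH Hpb Hmon.
  destruct (sign_lemma g p al be sg) as [Sa Sb]; auto.
  set (Pi := RInt p al be) in *.
  assert (Hgb : g be * p be <= ct * Pi) by (assert (0 <= p al) by auto; nra).
  set (R0 := RInt (fun y => (be - y) * p y) al be).
  assert (Q : sg * R0 <= g be * Pi).
  { assert (E : g be * Pi = RInt (fun y => g be * p y - g y * p y) al be).
    { rewrite RInt_minusR by (apply exRc; creg). rewrite RInt_scalR by (apply exRc; auto).
      rewrite HG. unfold Pi. simpl; ring. }
    rewrite E. unfold R0. rewrite <- RInt_scalR by (apply exRc; creg).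
    apply RInt_le'; [lra|creg|creg|]. intros y Hy.
    assert (sg * (be - y) <= g be - g y) by (apply Hsl; lra).
    assert (0 <= p y) by auto. nra. }
  assert (Ramp : Pi ^ 2 <= 2 * p be * R0).
  { apply ramp_right; auto; try (intros y Hy; split; auto). }
  assert (sg * Pi ^ 2 <= 2 * p be * (g be * Pi)) by nra.
  assert (2 * p be * (g be * Pi) <= 2 * ct * Pi ^ 2) by nra.
  assert (0 < Pi ^ 2) by nra.
  apply Rmult_le_reg_r with (Pi ^ 2); lra.
Qed.

Lemma case_dec (g p : R -> R) al be sg ct :
  al < be -> continuity g -> continuity p -> (forall y, 0 <= p y) ->
  0 < RInt p al be -> RInt (fun y => g y * p y) al be = 0 -> 0 < sg ->
  (forall y y', al <= y <= y' -> y' <= be -> sg * (y' - y) <= g y' - g y) ->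
  g be * p be - g al * p al <= ct * RInt p al be ->
  0 < p al -> (forall y, al <= y <= be -> p y <= p al) -> sg <= 2 * ct.
Proof.
  intros Hab Hg Hp Hp0 HPi HG Hsg Hsl HH Hpa Hmon.
  destruct (sign_lemma g p al be sg) as [Sa Sb]; auto.
  set (Pi := RInt p al be) in *.
  assert (Hga : - g al * p al <= ct * Pi) by (assert (0 <= p be) by auto; nra).
  set (R0 := RInt (fun y => (y - al) * p y) al be).
  assert (Q : sg * R0 <= - g al * Pi).
  { assert (E : - g al * Pi = RInt (fun y => g y * p y - g al * p y) al be).
    { rewrite RInt_minusR by (apply exRc; creg). rewrite RInt_scalR by (apply exRc; auto).
      rewrite HG. unfold Pi. simpl; ring. }
    rewrite E. unfold R0. rewrite <- RInt_scalR by (apply exRc; creg).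
    apply RInt_le'; [lra|creg|creg|]. intros y Hy.
    assert (sg * (y - al) <= g y - g al) by (apply Hsl; lra).
    assert (0 <= p y) by auto. assert (0 <= g y - g al) by nra. nra. }
  assert (Ramp : Pi ^ 2 <= 2 * p al * R0).
  { apply ramp_left; auto; try (intros y Hy; split; auto). }
  assert (sg * Pi ^ 2 <= 2 * p al * (- g al * Pi)) by nra.
  assert (2 * p al * (- g al * Pi) <= 2 * ct * Pi ^ 2) by nra.
  assert (0 < Pi ^ 2) by nra.
  apply Rmult_le_reg_r with (Pi ^ 2); lra.
Qed.

Lemma case_mid (g p : R -> R) al be sg ct :
  al < be -> continuity g -> continuity p -> (forall y, 0 <= p y) ->
  0 < RInt p al be -> RInt (fun y => g y * p y) al be = 0 -> 0 < sg -> 0 < ct ->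
  (forall y y', al <= y <= y' -> y' <= be -> sg * (y' - y) <= g y' - g y) ->
  g be * p be - g al * p al <= ct * RInt p al be ->
  0 < p al -> 0 < p be ->
  (forall y, al <= y <= be -> p y <= 2 * p al /\ p y <= 2 * p be) -> sg <= 2 * ct.
Proof.
  intros Hab Hg Hp Hp0 HPi HG Hsg Hct Hsl HH Hpa Hpb Hmon.
  destruct (sign_lemma g p al be sg) as [Sa Sb]; auto.
  set (Pi := RInt p al be) in *.
  set (Pe := Rmin (p al) (p be)).
  assert (Pe_a : Pe <= p al) by apply Rmin_l.
  assert (Pe_b : Pe <= p be) by apply Rmin_r.
  assert (Pe_p : 0 < Pe) by (unfold Pe, Rmin; destruct Rle_dec; lra).
  assert (HPi2 : Pi <= (be - al) * (2 * Pe)).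
  { unfold Pi. rewrite <- RInt_constR. apply RInt_le'; [lra|auto| |].
    apply continuity_const; intros ? ?; auto.
    intros y Hy. destruct (Hmon y Hy). unfold Pe, Rmin; destruct Rle_dec; lra. }
  assert (L1 : Pe * (g be - g al) <= g be * p be - g al * p al) by nra.
  assert (L2 : sg * (be - al) <= g be - g al) by (apply Hsl; lra).
  assert (Pe * (sg * (be - al)) <= ct * ((be - al) * (2 * Pe))) by nra.
  assert (0 < Pe * (be - al)) by nra.
  apply Rmult_le_reg_r with (Pe * (be - al)); nra.
Qed.

Lemma maxR_sel_ge0 n P F : 0 <= maxR_sel n P F.
Proof.
  induction n; simpl; [lra|]. destruct excluded_middle_informative; auto.
  eapply Rle_trans; [apply IHn|apply Rmax_l].
Qed.
Lemma maxR_sel_ge n P F t : (1 <= t <= n)%nat -> P t -> F t <= maxR_sel n P F.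
Proof.
  induction n; intros Ht HP; [lia|]. simpl.
  destruct (Nat.eq_dec t (S n)).
  - subst. destruct excluded_middle_informative; [apply Rmax_r|contradiction].
  - assert (F t <= maxR_sel n P F) by (apply IHn; auto; lia).
    destruct excluded_middle_informative; auto.
    eapply Rle_trans; [eauto|apply Rmax_l].
Qed.
Lemma sumR_sel_empty n P F : (forall k, (1 <= k <= n)%nat -> ~ P k) -> sumR_sel n P F = 0.
Proof.
  intros H. unfold sumR_sel. rewrite (sumR_ext n _ (fun _ => 0)). apply sumR_zero.
  intros k Hk. destruct excluded_middle_informative; auto. exfalso; eapply H; eauto.
Qed.
Lemma sumR_sel_single n i F : (1 <= i <= n)%nat -> sumR_sel n (fun k => k = i) F = F i.
Proof.
  intros Hi. unfold sumR_sel. rewrite (sumR_ext n _ (fun k => if Nat.eqb k i then F k else 0)).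
  apply sumR_delta; auto.
  intros k Hk. destruct excluded_middle_informative; destruct (Nat.eqb_spec k i); subst; auto; contradiction.
Qed.
Lemma minR_le n F k : (1 <= k <= n)%nat -> minR n F <= F k.
Proof.
  induction n; intros Hk; [lia|]. simpl.
  destruct (Nat.eq_dec k (S n)).
  - subst. apply Rmin_r.
  - eapply Rle_trans; [apply Rmin_l|]. apply IHn. lia.
Qed.
Lemma minR_pos n F : (1 <= n)%nat -> (forall k, (1 <= k <= n)%nat -> 0 < F k) -> 0 < minR n F.
Proof.
  induction n; intros Hn H; [lia|]. simpl.
  assert (0 < minR n F).
  { destruct n. simpl. apply H. lia. apply IHn. lia. intros; apply H; lia. }
  assert (0 < F (S n)) by (apply H; lia).
  unfold Rmin; destruct Rle_dec; lra.
Qed.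

Lemma argmin_exists n (P : nat -> Prop) (F : nat -> R) :
  (exists k, (1 <= k <= n)%nat /\ P k) ->
  exists t, (1 <= t <= n)%nat /\ P t /\ forall k, (1 <= k <= n)%nat -> P k -> F t <= F k.
Proof.
  induction n; intros [k [Hk HPk]]; [lia|].
  destruct (classic (exists k, (1 <= k <= n)%nat /\ P k)) as [Hex|Hno].
  - destruct (IHn Hex) as [t [Ht [HPt Hmin]]].
    destruct (classic (P (S n))) as [HPS|HPS].
    + destruct (Rle_dec (F t) (F (S n))).
      * exists t. split; [lia|]. split; auto. intros j Hj HPj.
        destruct (Nat.eq_dec j (S n)); [subst; auto|]. apply Hmin; auto; lia.
      * exists (S n). split; [lia|]. split; auto. intros j Hj HPj.
        destruct (Nat.eq_dec j (S n)); [subst; lra|].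
        assert (F t <= F j) by (apply Hmin; auto; lia). lra.
    + exists t. split; [lia|]. split; auto. intros j Hj HPj.
      destruct (Nat.eq_dec j (S n)); [subst; contradiction|]. apply Hmin; auto; lia.
  - assert (k = S n).
    { destruct (Nat.eq_dec k (S n)); auto. exfalso. apply Hno. exists k. split; auto; lia. }
    subst. exists (S n). split; [lia|]. split; auto. intros j Hj HPj.
    destruct (Nat.eq_dec j (S n)); [subst; lra|]. exfalso. apply Hno. exists j. split; auto; lia.
Qed.

Lemma Lip_le a b F y z : a <= y <= b -> a <= z <= b -> y <> z ->
  Rbar_le (Finite (Rabs (F y - F z) / Rabs (y - z))) (Lip a b F).
Proof.
  intros Hy Hz Hyz. unfold Lip.
  destruct (Lub_Rbar_correct (fun r => exists x y, a <= x <= b /\ a <= y <= b /\ x <> y /\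
                         r = Rabs (F x - F y) / Rabs (x - y))) as [Hub _].
  apply Hub. exists y, z. repeat split; auto; lra.
Qed.

Lemma Lip_bound a b F L : Lip a b F = Finite L ->
  forall y z, a <= y <= b -> a <= z <= b -> Rabs (F y - F z) <= L * Rabs (y - z).
Proof.
  intros HL y z Hy Hz. destruct (Req_dec y z) as [E|E].
  - subst. rewrite !Rminus_diag, Rabs_R0. lra.
  - pose proof (Lip_le a b F y z Hy Hz E) as H. rewrite HL in H. simpl in H.
    assert (0 < Rabs (y - z)) by (apply Rabs_pos_lt; lra).
    apply Rmult_le_compat_r with (r := Rabs (y - z)) in H; [|lra].
    field_simplify in H; lra.
Qed.

Lemma Lip_finite_lt a b F c : a < b -> Rbar_lt (Lip a b F) (Finite c) ->
  exists L, Lip a b F = Finite L /\ L < c /\ 0 <= L.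
Proof.
  intros Hab H. pose proof (Lip_le a b F a b) as H0.
  destruct (Lip a b F) eqn:E; simpl in H.
  - exists r. split; auto. split; auto.
    assert (T : Rbar_le (Finite (Rabs (F a - F b) / Rabs (a - b))) (Finite r)) by (apply H0; lra).
    simpl in T. eapply Rle_trans; [|apply T].
    apply Rmult_le_pos; [apply Rabs_pos|]. left; apply Rinv_0_lt_compat, Rabs_pos_lt; lra.
  - contradiction.
  - assert (T : Rbar_le (Finite (Rabs (F a - F b) / Rabs (a - b))) m_infty) by (apply H0; lra).
    simpl in T. contradiction.
Qed.

Lemma inf_le c d F z : c <= z <= d -> Rbar_le (inf_on c d F) (Finite (F z)).
Proof.
  intros Hz. unfold inf_on.
  destruct (Glb_Rbar_correct (fun r => exists x, c <= x <= d /\ r = F x)) as [Hlb _].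
  apply Hlb. exists z. split; auto.
Qed.

Lemma Lip_p_mid a b p m c d z : a < b -> 0 < m ->
  Rbar_le (Rbar_mult (Finite (/ m)) (Lip a b p)) (inf_on c d p) -> c <= z <= d ->
  exists L, Lip a b p = Finite L /\ / m * L <= p z /\ 0 <= L.
Proof.
  intros Hab Hm H Hz. pose proof (inf_le c d p z Hz) as Hi.
  pose proof (Rbar_le_trans _ _ _ H Hi) as H1.
  pose proof (Lip_le a b p a b) as H0.
  assert (Him : 0 < / m) by (apply Rinv_0_lt_compat; auto).
  destruct (Lip a b p) eqn:E.
  - exists r. simpl in H1. split; auto. split; auto.
    assert (T : Rbar_le (Finite (Rabs (p a - p b) / Rabs (a - b))) (Finite r)) by (apply H0; lra).
    simpl in T. eapply Rle_trans; [|apply T].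
    apply Rmult_le_pos; [apply Rabs_pos|]. left; apply Rinv_0_lt_compat, Rabs_pos_lt; lra.
  - exfalso. unfold Rbar_mult, Rbar_mult' in H1.
    destruct (Rle_dec 0 (/ m)) as [H2|H2]; [|lra].
    destruct (Rle_lt_or_eq_dec 0 (/ m) H2); [|lra]. simpl in H1. auto.
  - assert (T : Rbar_le (Finite (Rabs (p a - p b) / Rabs (a - b))) m_infty) by (apply H0; lra).
    simpl in T. contradiction.
Qed.

Lemma clamp_RInt (q : R -> R) a b l r al be :
  continuity q -> (forall y, y <= a -> q y = 0) -> (forall y, b <= y -> q y = 0) ->
  al = Rmax a l -> be = Rmin b r -> al <= be ->
  RInt q l r = RInt q al be.
Proof.
  intros Hq Ha Hb Hal Hbe Hab.
  rewrite <- (RInt_ChaslesR q l be r) by (apply exRc; auto).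
  rewrite <- (RInt_ChaslesR q l al be) by (apply exRc; auto).
  rewrite (RInt_zero_out q l al), (RInt_zero_out q be r).
  - simpl; lra.
  - intros y Hy. unfold Rmin, Rmax in Hbe, Hy. destruct (Rle_dec b r).
    + apply Hb. subst be. destruct (Rle_dec b r); lra.
    + subst be. destruct (Rle_dec r r); lra.
  - intros y Hy. unfold Rmin, Rmax in Hal, Hy. destruct (Rle_dec a l).
    + subst al. destruct (Rle_dec l l); lra.
    + apply Ha. subst al. destruct (Rle_dec l a); lra.
Qed.

Lemma neuron_facts a b h v w f p theta i x :
  a < b -> (1 <= i <= h)%nat -> 0 < v i -> 0 < w i -> continuity f -> continuity p ->
  (forall y, y <= a -> p y = 0) -> (forall y, b <= y -> p y = 0) ->
  partial (Risk a b h v w f p) theta i = 0 ->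
  0 <= hess (Risk a b h v w f p) theta i i ->
  inI a b w theta i x ->
  let g := fun y => Nnet h v w theta y - f y in
  let al := Rmax a (psi w theta i) in
  let be := Rmin b (psi w theta i + / w i) in
  (al < x < be /\ a <= al /\ be <= b /\ be - al <= / w i /\
  (forall y, al <= y <= be -> 0 <= w i * y + theta i <= 1)) /\
  RInt (fun y => g y * p y) al be = 0 /\
  g be * p be - g al * p al <= v i * w i * RInt p al be.
Proof.
  intros Hab Hi Hv Hw Hf Hp Hpa Hpb Hgr Hhe Hx g al be.
  set (l := psi w theta i) in *. set (r := l + / w i) in *.
  assert (Hiw : 0 < / w i) by (apply Rinv_0_lt_compat; auto).
  assert (Elo : lo (w i) (theta i) = l) by (unfold lo, l, psi; ring).
  assert (Ehi : hi (w i) (theta i) = r) by (unfold hi, r, l, psi; ring).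
  assert (Wl : w i * l + theta i = 0) by (unfold l, psi; field; lra).
  assert (Wr : w i * r + theta i = 1) by (unfold r, l, psi; field; lra).
  assert (HL : forall y, l <= y <= r -> 0 <= w i * y + theta i <= 1).
  { intros y Hy. split; nra. }
  destruct Hx as [[Hx1 Hx2] [Hx3 Hx4]]. fold l in Hx1, Hx2. fold r in Hx2.
  assert (Hal : al < x) by (unfold al, Rmax; destruct Rle_dec; lra).
  assert (Hbe : x < be) by (unfold be, Rmin; destruct Rle_dec; lra).
  assert (Hg : continuity g) by (unfold g; apply continuity_minus; [apply Nnet_cont|auto]).
  assert (Hgp : continuity (fun y => g y * p y)) by (apply continuity_mult; auto).
  assert (Hsub : forall y, al <= y <= be -> l <= y <= r).
  { intros y Hy. unfold al, be, Rmax, Rmin in Hy. destruct Rle_dec; destruct Rle_dec; lra. }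
  split.
  { split; [lra|]. split; [unfold al; apply Rmax_l|]. split; [unfold be; apply Rmin_l|]. split.
    - assert (al >= l) by (unfold al; apply Rle_ge, Rmax_r).
      assert (be <= r) by (unfold be; apply Rmin_r). unfold r in *. lra.
    - intros y Hy. apply HL, Hsub; auto. }
  assert (Hc : continuity (Cn h v w f theta i)) by (apply Cn_cont; auto).
  split.
  - rewrite partial_eq0 in Hgr by auto.
    rewrite D1_RInt in Hgr by auto. rewrite Elo, Ehi in Hgr.
    assert (E : RInt (fun y => (Cn h v w f theta i y + v i * (w i * y + theta i)) * p y) l r = 0).
    { apply Rmult_eq_reg_l with (2 * v i); [|lra]. rewrite Hgr. ring. }
    rewrite (RInt_ext _ (fun y => g y * p y)) in E.
    + rewrite <- E. symmetry. apply (clamp_RInt _ a b); auto.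
      * intros y Hy. rewrite Hpa; auto; ring.
      * intros y Hy. rewrite Hpb; auto; ring.
      * lra.
    + intros y Hy. unfold Cn, g. rewrite (clip_lin (w i * y + theta i)).
      * rring.
      * apply HL. unfold Rmin, Rmax in Hy. destruct Rle_dec; lra.
  - rewrite hess_eq in Hhe by auto. unfold D2 in Hhe. rewrite Elo, Ehi in Hhe.
    rewrite <- RInt_prim in Hhe by auto.
    assert (Er : Cn h v w f theta i r + v i = g r).
    { unfold Cn, g. rewrite Wr, clip_1 by lra. ring. }
    assert (El : Cn h v w f theta i l = g l).
    { unfold Cn, g. rewrite Wl, clip_0 by lra. ring. }
    rewrite Er, El in Hhe.
    assert (K : g r * p r - g l * p l <= v i * w i * RInt p l r).
    { assert (0 <= v i * RInt p l r - / w i * (g r * p r - g l * p l)).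
      { apply Rmult_le_reg_l with (2 * v i); [lra|]. rewrite Rmult_0_r. lra. }
      assert (T : w i * (/ w i * (g r * p r - g l * p l)) = g r * p r - g l * p l) by (field; lra).
      nra. }
    assert (Er2 : g r * p r = g be * p be).
    { unfold be, Rmin. destruct Rle_dec; auto. rewrite !Hpb by lra. ring. }
    assert (El2 : g l * p l = g al * p al).
    { unfold al, Rmax. destruct Rle_dec; auto. rewrite !Hpa by lra. ring. }
    rewrite <- Er2, <- El2. rewrite <- (clamp_RInt p a b l r al be); auto. lra.
Qed.

Lemma g_incr a b h v w f theta (P : nat -> Prop) Lf y y' :
  (forall k, (1 <= k <= h)%nat -> 0 < v k) -> (forall k, (1 <= k <= h)%nat -> 0 < w k) ->
  (forall u z, a <= u <= b -> a <= z <= b -> Rabs (f u - f z) <= Lf * Rabs (u - z)) ->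
  a <= y -> y <= y' -> y' <= b ->
  (forall k, (1 <= k <= h)%nat -> P k -> 0 <= w k * y + theta k /\ w k * y' + theta k <= 1) ->
  (sumR_sel h P (fun j => v j * w j) - Lf) * (y' - y)
    <= (Nnet h v w theta y' - f y') - (Nnet h v w theta y - f y).
Proof.
  intros Hv Hw HL Hy Hyy Hy' HP.
  assert (Hf : f y' - f y <= Lf * (y' - y)).
  { pose proof (HL y' y ltac:(lra) ltac:(lra)) as T. rewrite (Rabs_right (y' - y)) in T by lra.
    pose proof (Rle_abs (f y' - f y)). lra. }
  assert (HN : sumR_sel h P (fun j => v j * w j) * (y' - y) <= Nnet h v w theta y' - Nnet h v w theta y).
  { unfold Nnet, sumR_sel. rewrite <- sumR_scal.
    replace (theta (S h) + sumR h (fun i => v i * clip (w i * y' + theta i)) -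
             (theta (S h) + sumR h (fun i => v i * clip (w i * y + theta i))))
      with (sumR h (fun i => v i * clip (w i * y' + theta i)) - sumR h (fun i => v i * clip (w i * y + theta i)))
      by ring.
    rewrite sumR_minus. apply sumR_le. intros k Hk.
    assert (0 < v k) by auto. assert (0 < w k) by auto.
    destruct excluded_middle_informative as [Pk|Pk].
    - destruct (HP k Hk Pk).
      rewrite !clip_lin by (split; nra). nra.
    - assert (clip (w k * y + theta k) <= clip (w k * y' + theta k)) by (apply clip_mono; nra).
      nra. }
  lra.
Qed.

Lemma no_cross (g p : R -> R) a b a1 b1 a2 b2 s1 s2 :
  continuity g -> continuity p -> (forall y, a < y < b -> 0 < p y) -> (forall y, 0 <= p y) ->
  a <= a1 -> b2 <= b -> a1 < a2 -> a2 < b1 -> b1 < b2 ->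
  RInt (fun y => g y * p y) a1 b1 = 0 -> RInt (fun y => g y * p y) a2 b2 = 0 ->
  0 < s1 -> (forall y y', a1 <= y <= y' -> y' <= b1 -> s1 * (y' - y) <= g y' - g y) ->
  0 < s2 -> (forall y y', a2 <= y <= y' -> y' <= b2 -> s2 * (y' - y) <= g y' - g y) ->
  False.
Proof.
  intros Hg Hp Hpp Hp0 Ha1 Hb2 H12 H21 H22 G1 G2 Hs1 Sl1 Hs2 Sl2.
  assert (Hgp : continuity (fun y => g y * p y)) by (apply continuity_mult; auto).
  set (m1 := RInt (fun y => g y * p y) a1 a2).
  set (m2 := RInt (fun y => g y * p y) a2 b1).
  set (m3 := RInt (fun y => g y * p y) b1 b2).
  assert (E1 : m1 + m2 = 0) by (rewrite <- G1; apply RInt_ChaslesR; apply exRc; auto).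
  assert (E2 : m2 + m3 = 0) by (rewrite <- G2; apply RInt_ChaslesR; apply exRc; auto).
  assert (P1 : 0 < RInt p a1 a2).
  { apply RInt_gt_0; [lra| |]. intros; apply Hpp; lra. intros; apply c2c; auto. }
  assert (P3 : 0 < RInt p b1 b2).
  { apply RInt_gt_0; [lra| |]. intros; apply Hpp; lra. intros; apply c2c; auto. }
  assert (P2 : 0 <= RInt p a2 b1).
  { replace 0 with ((b1 - a2) * 0) by ring. rewrite <- RInt_constR.
    apply RInt_le'; [lra| |auto|]. apply continuity_const; intros ? ?; auto. intros; auto. }
  assert (B1 : m1 <= g a2 * RInt p a1 a2).
  { unfold m1. rewrite <- RInt_scalR by (apply exRc; auto). apply RInt_le'; [lra|auto|creg|].
    intros y Hy. assert (s1 * (a2 - y) <= g a2 - g y) by (apply Sl1; lra).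
    assert (0 <= p y) by auto. assert (0 <= g a2 - g y) by nra. nra. }
  assert (B2 : g a2 * RInt p a2 b1 <= m2).
  { unfold m2. rewrite <- RInt_scalR by (apply exRc; auto). apply RInt_le'; [lra|creg|auto|].
    intros y Hy. assert (s1 * (y - a2) <= g y - g a2) by (apply Sl1; lra).
    assert (0 <= p y) by auto. assert (0 <= g y - g a2) by nra. nra. }
  assert (B3 : m2 <= g b1 * RInt p a2 b1).
  { unfold m2. rewrite <- RInt_scalR by (apply exRc; auto). apply RInt_le'; [lra|auto|creg|].
    intros y Hy. assert (s1 * (b1 - y) <= g b1 - g y) by (apply Sl1; lra).
    assert (0 <= p y) by auto. assert (0 <= g b1 - g y) by nra. nra. }
  assert (B4 : g b1 * RInt p b1 b2 <= m3).
  { unfold m3. rewrite <- RInt_scalR by (apply exRc; auto). apply RInt_le'; [lra|creg|auto|].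
    intros y Hy. assert (s2 * (y - b1) <= g y - g b1) by (apply Sl2; lra).
    assert (0 <= p y) by auto. assert (0 <= g y - g b1) by nra. nra. }
  assert (B5 : s1 * (b1 - a2) <= g b1 - g a2) by (apply Sl1; lra).
  assert (g a2 < g b1) by nra.
  destruct (Rle_dec 0 (g a2)).
  - assert (0 < g b1 * RInt p b1 b2) by (apply Rmult_lt_0_compat; lra).
    assert (0 <= g a2 * RInt p a2 b1) by (apply Rmult_le_pos; lra).
    lra.
  - assert (g a2 * RInt p a1 a2 < 0) by (apply Rmult_neg_pos; lra).
    assert (0 < m2) by lra.
    assert (g b1 * RInt p b1 b2 < 0) by lra.
    assert (g b1 < 0) by nra.
    assert (g b1 * RInt p a2 b1 <= 0) by nra.
    lra.
Qed.

Theorem corollary2p11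
  (a b : R) (h : nat) (v w : nat -> R) (f p : R -> R)
  (theta : nat -> R) (eps delta : R) :
  a < b ->
  (1 <= h)%nat ->
  (forall i, (1 <= i <= h)%nat -> 0 < v i) ->
  (forall i, (1 <= i <= h)%nat -> 0 < w i) ->
  continuity f -> continuity p ->
  (forall x, 0 <= p x) ->
  (forall x, 0 < p x <-> a < x < b) ->
  Rbar_lt (Lip a b f) (Finite (minR h (fun i => v i * w i))) ->
  grad_zero (S h) (Risk a b h v w f p) theta ->
  0 < eps -> 0 < delta ->
  eps - delta > 2 * / minR h w ->
  Rbar_le (Rbar_mult (Finite (/ minR h w)) (Lip a b p))
          (inf_on (a + delta) (b - delta) p) ->
  (forall x y, a <= x -> x < y -> y <= a + eps -> p x < p y) ->
  (forall x y, b - eps <= x -> x < y -> y <= b -> p x > p y) ->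
  ~ descending_critical_point (S h) (Risk a b h v w f p) theta ->
  forall x, a < x < b ->
    sumR_sel h (fun j => inI a b w theta j x) (fun j => v j * w j)
    <= 4 * maxR_sel h (fun j => inI a b w theta j x) (fun j => v j * w j).
Proof.
  intros Hab Hh Hv Hw Hf Hp Hp0 Hpos HLf Hgrad Heps Hdel Hed HLp Hinc Hdec Hnd x Hx.
  assert (Hm : 0 < minR h w) by (apply minR_pos; auto).
  assert (Hcm : 0 < minR h (fun i => v i * w i)).
  { apply minR_pos; auto. intros k Hk. apply Rmult_lt_0_compat; auto. }
  assert (Hpa : forall y, y <= a -> p y = 0).
  { intros y Hy. destruct (Hp0 y) as [H|H]; auto. apply Hpos in H. lra. }
  assert (Hpb : forall y, b <= y -> p y = 0).
  { intros y Hy. destruct (Hp0 y) as [H|H]; auto. apply Hpos in H. lra. }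
  assert (Hpp : forall y, a < y < b -> 0 < p y) by (intros; apply Hpos; auto).
  destruct (Lip_finite_lt a b f _ Hab HLf) as [Lf [HLfe [HLfc HLf0]]].
  pose proof (Lip_bound a b f Lf HLfe) as HfL.
  assert (Hpsd : forall i, (1 <= i <= h)%nat -> 0 <= hess (Risk a b h v w f p) theta i i).
  { intros i Hi. apply Rnot_lt_le. intro Hneg. apply Hnd. split; auto.
    exists (fun k => if Nat.eqb k i then 1 else 0). rewrite hess_quad_unit by lia. auto. }
  assert (Hpart : forall i, (1 <= i <= h)%nat -> partial (Risk a b h v w f p) theta i = 0).
  { intros i Hi. apply Hgrad. lia. }
  set (g := fun y => Nnet h v w theta y - f y).
  assert (Hg : continuity g) by (unfold g; apply continuity_minus; [apply Nnet_cont|auto]).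
  set (al := fun k => Rmax a (psi w theta k)).
  set (be := fun k => Rmin b (psi w theta k + / w k)).
  set (A := fun k => inI a b w theta k x).
  assert (NF : forall k, (1 <= k <= h)%nat -> A k ->
    (al k < x < be k /\ a <= al k /\ be k <= b /\ be k - al k <= / w k /\
    (forall y, al k <= y <= be k -> 0 <= w k * y + theta k <= 1)) /\
    RInt (fun y => g y * p y) (al k) (be k) = 0 /\
    g (be k) * p (be k) - g (al k) * p (al k) <= v k * w k * RInt p (al k) (be k)).
  { intros k Hk Ak. apply (neuron_facts a b h v w f p theta k x); auto. }
  assert (SL1 : forall k, (1 <= k <= h)%nat -> A k -> forall y y', al k <= y <= y' -> y' <= be k ->
     (v k * w k - Lf) * (y' - y) <= g y' - g y).
  { intros k Hk Ak y y' Hy Hy'. destruct (NF k Hk Ak) as [[N1 [N2 [N3 [N4 N5]]]] _].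
    rewrite <- (sumR_sel_single h k (fun j => v j * w j)) by auto.
    apply (g_incr a b h v w f theta (fun j => j = k) Lf y y'); auto; try lra.
    intros j Hj Ej. subst j. split; [apply (N5 y)|apply (N5 y')]; lra. }
  assert (Hck : forall k, (1 <= k <= h)%nat -> minR h (fun i => v i * w i) <= v k * w k).
  { intros k Hk. apply (minR_le h (fun i => v i * w i) k Hk). }
  destruct (classic (exists k, (1 <= k <= h)%nat /\ A k)) as [Hex|Hno].
  2:{ rewrite sumR_sel_empty.
      - pose proof (maxR_sel_ge0 h A (fun j => v j * w j)). lra.
      - intros k Hk Ak. apply Hno. exists k. auto. }
  destruct (argmin_exists h A (fun k => be k - al k) Hex) as [t [Ht [At Hmin]]].
  destruct (NF t Ht At) as [[T1 [T2 [T3 [T4 T5]]]] [TG TH]].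
  assert (Cont : forall k, (1 <= k <= h)%nat -> A k -> al k <= al t /\ be t <= be k).
  { intros k Hk Ak. destruct (NF k Hk Ak) as [[K1 [K2 [K3 [K4 K5]]]] [KG KH]].
    pose proof (Hmin k Hk Ak) as Hle. cbv beta in Hle.
    assert (ck : 0 < v k * w k - Lf) by (pose proof (Hck k Hk); lra).
    assert (ct : 0 < v t * w t - Lf) by (pose proof (Hck t Ht); lra).
    split.
    - destruct (Rle_dec (al k) (al t)) as [E|E]; auto. exfalso.
      apply (no_cross g p a b (al t) (be t) (al k) (be k) (v t * w t - Lf) (v k * w k - Lf)); auto; try lra;
      intros; apply SL1; auto.
    - destruct (Rle_dec (be t) (be k)) as [E|E]; auto. exfalso.
      apply (no_cross g p a b (al k) (be k) (al t) (be t) (v k * w k - Lf) (v t * w t - Lf)); auto; try lra;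
      intros; apply SL1; auto. }
  set (Ssum := sumR_sel h A (fun j => v j * w j)).
  assert (SLS : forall y y', al t <= y <= y' -> y' <= be t -> (Ssum - Lf) * (y' - y) <= g y' - g y).
  { intros y y' Hy Hy'. unfold Ssum.
    apply (g_incr a b h v w f theta A Lf y y'); auto; try lra.
    intros k Hk Ak. destruct (NF k Hk Ak) as [[K1 [K2 [K3 [K4 K5]]]] _].
    destruct (Cont k Hk Ak). split; [apply (K5 y)|apply (K5 y')]; lra. }
  assert (Hct : 0 < v t * w t) by (apply Rmult_lt_0_compat; auto).
  assert (Hwt : / w t <= / minR h w).
  { apply Rinv_le_contravar; auto. apply minR_le; auto. }
  assert (Hsig : Ssum - Lf <= 2 * (v t * w t)).
  { destruct (Rle_dec (Ssum - Lf) 0) as [E|E]; [lra|].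
    assert (Hs : 0 < Ssum - Lf) by lra.
    assert (HPi : 0 < RInt p (al t) (be t)).
    { apply RInt_gt_0; [lra| |]. intros; apply Hpp; lra. intros; apply c2c; auto. }
    destruct (Rlt_dec (al t) (a + delta)) as [C1|C1].
    { (* left boundary region: p increasing *)
      assert (Hbe : be t <= a + eps) by lra.
      assert (Hmon : forall y, al t <= y <= be t -> p y <= p (be t)).
      { intros y Hy. destruct (Req_dec y (be t)) as [E1|E1]; [subst; lra|].
        left. apply Hinc; lra. }
      assert (Hpbe : 0 < p (be t)).
      { assert (p x < p (be t)) by (apply Hinc; lra). pose proof (Hpp x Hx). lra. }
      apply (case_inc g p (al t) (be t) (Ssum - Lf) (v t * w t)); auto; lra. }
    destruct (Rlt_dec (b - delta) (be t)) as [C2|C2].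
    { (* right boundary region: p decreasing *)
      assert (Hal : b - eps <= al t) by lra.
      assert (Hmon : forall y, al t <= y <= be t -> p y <= p (al t)).
      { intros y Hy. destruct (Req_dec y (al t)) as [E1|E1]; [subst; lra|].
        left. apply Hdec; lra. }
      assert (Hpal : 0 < p (al t)).
      { assert (p (al t) > p x) by (apply Hdec; lra). pose proof (Hpp x Hx). lra. }
      apply (case_dec g p (al t) (be t) (Ssum - Lf) (v t * w t)); auto; lra. }
    destruct (Lip_p_mid a b p (minR h w) (a + delta) (b - delta) (al t)) as [Lp [HLpe [HLpa HLp0]]]; auto; try lra.
    destruct (Lip_p_mid a b p (minR h w) (a + delta) (b - delta) (be t)) as [Lp' [HLpe' [HLpb _]]]; auto; try lra.
    rewrite HLpe in HLpe'. injection HLpe' as HLL. subst Lp'.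
    pose proof (Lip_bound a b p Lp HLpe) as HpL.
    assert (Hpal : 0 < p (al t)) by (apply Hpp; lra).
    assert (Hpbe : 0 < p (be t)) by (apply Hpp; lra).
    assert (HLw : Lp * (be t - al t) <= / minR h w * Lp).
    { assert (Lp * (be t - al t) <= Lp * / w t) by (apply Rmult_le_compat_l; lra).
      assert (Lp * / w t <= Lp * / minR h w) by (apply Rmult_le_compat_l; lra). lra. }
    apply (case_mid g p (al t) (be t) (Ssum - Lf) (v t * w t)); auto; try lra.
    intros y Hy. split.
    - pose proof (HpL y (al t) ltac:(lra) ltac:(lra)) as T.
      rewrite (Rabs_right (y - al t)) in T by lra.
      pose proof (Rle_abs (p y - p (al t))).
      assert (Lp * (y - al t) <= Lp * (be t - al t)) by (apply Rmult_le_compat_l; lra). lra.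
    - pose proof (HpL y (be t) ltac:(lra) ltac:(lra)) as T.
      rewrite (Rabs_left1 (y - be t)) in T by lra.
      pose proof (Rle_abs (p y - p (be t))).
      assert (Lp * (- (y - be t)) <= Lp * (be t - al t)) by (apply Rmult_le_compat_l; lra). lra. }
  pose proof (Hck t Ht) as Hct2.
  pose proof (maxR_sel_ge h A (fun j => v j * w j) t Ht At) as Hmax.
  fold Ssum. lra.
Qed.
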